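(* There is no non-trivial subfunctor $F$ of the identity functor on the category of abelian groups such that $F(A)$ is torsion-free for every abelian group $A$.
   Context: A subfunctor $F$ of the identity functor on abelian groups assigns to each abelian group $A$ a subgroup $F(A)\subseteq A$ with $f(F(A))\subseteq F(A')$ for every homomorphism $f:A\to A'$; it is non-trivial if $F(A)\neq 0$ for some $A$. *)

(* Defs.v *)
From HB Require Import structures.
From mathcomp Require Import all_boot all_order all_algebra.
Set Implicit Arguments. Unset Strict Implicit. Unset Printing Implicit Defensive.
Import GRing.Theory.
Local Open Scope ring_scope.

(* Abelian groups are modelled as [zmodType]s, homomorphisms as
   [{additive A -> B}]. *)
Definition is_subgroup (A : zmodType) (S : A -> Prop) : Prop :=
  S 0 /\ (forall x y, S x -> S y -> S (x - y)).

Definition is_id_subfunctor (F : forall A : zmodType, A -> Prop) : Prop :=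
  (forall A : zmodType, is_subgroup (F A)) /\
  (forall (A B : zmodType) (f : {additive A -> B}) (x : A),
      F A x -> F B (f x)).

Definition nontrivial_subfunctor (F : forall A : zmodType, A -> Prop) : Prop :=
  exists (A : zmodType) (x : A), F A x /\ x <> 0.

Definition torsion_free_sub (A : zmodType) (S : A -> Prop) : Prop :=
  forall (x : A) (n : nat), S x -> x *+ n.+1 = 0 -> x = 0.

(* Main.v *)
Require Import Defs.
From HB Require Import structures.
From mathcomp Require Import all_boot all_order all_algebra.
From mathcomp Require Import generic_quotient ring_quotient zify.
From Stdlib Require Import ClassicalEpsilon.
Import GRing.Theory.
Local Open Scope ring_scope.
Local Open Scope quotient_scope.

Definition pb (P : Prop) : bool := if excluded_middle_informative P then true else false.
Lemma pbP (P : Prop) : reflect P (pb P).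
Proof. rewrite /pb; case: excluded_middle_informative => h; constructor; done. Qed.

Section Q.
Variables (A : zmodType) (x : A).
Definition S2 : {pred A} := fun a => pb (exists k : int, a = (x *+ 2) *~ k).
Lemma S2_closed : zmod_closed S2.
Proof.
split; first by apply/pbP; exists 0; rewrite mulr0z.
move=> a b /pbP [k ->] /pbP [l ->]; apply/pbP; exists (k - l).
by rewrite mulrzBr.
Qed.
HB.instance Definition _ := GRing.isZmodClosed.Build A S2 S2_closed.
Definition QS := Quotient.quot S2.
Lemma piS2 (a : A) : (\pi_QS a = 0) -> a \in S2.
Proof.
move=> h. have := @Quotient.idealrBE _ S2 a 0.
rewrite subr0 => ->; apply/eqP; rewrite h; symmetry. exact: raddf0.
Qed.
End Q.

Theorem corollary3p18 :
  ~ exists F : forall A : zmodType, A -> Prop,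
      is_id_subfunctor F /\ nontrivial_subfunctor F /\
      (forall A : zmodType, torsion_free_sub (F A)).
Proof.
move=> [F [[_ Ff] [[A [x [Fx x0]]] tf]]].
have inf : forall k : int, x *~ k = 0 -> k = 0.
  case=> n.
    case: n => // n h; exfalso; exact: x0 (tf A x n Fx h).
  rewrite NegzE mulrNz => /eqP; rewrite oppr_eq0 => /eqP h.
  exfalso; exact: x0 (tf A x n Fx h).
have Fy := Ff A (@QS A x) (\pi_(@QS A x)) x Fx.
have y0 : \pi_(@QS A x) x *+ 2 = 0.
  rewrite -raddfMn; apply/eqP.
  have := @Quotient.idealrBE _ (S2 A x) (x *+ 2) 0.
  rewrite subr0 raddf0 => <-.
  by apply/pbP; exists 1; rewrite mulr1z.
have := @piS2 A x x (tf _ _ 1 Fy y0).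
move=> /pbP [k hk].
have : x *~ (1 - k * 2) = 0.
  by rewrite mulrzBr mulr1z (mulrC k) mulrzA -[x *~ 2]/(x *+ 2) -hk subrr.
move/inf; lia.
Qed.
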